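(* For integers $n\ge 0$ and $k\ge 0$ (as polynomial identity in $x$, $x\neq -1$), \[ \frac{d^{k}}{dx^{k}}w_{n}(x)=\frac{k!}{(1+x)^{k}}\sum_{m=k}^{n}\sum_{j=0}^{k}\binom{n}{m}\genfrac{\{}{\}}{0pt}{}{m}{k}\genfrac{[}{]}{0pt}{}{k+1}{j+1}\,w_{n-m+j}(x). \]
   Context: $\genfrac{\{}{\}}{0pt}{}{n}{k}$ denotes the Stirling numbers of the second kind and $\genfrac{[}{]}{0pt}{}{n}{k}$ the unsigned Stirling numbers of the first kind. The geometric polynomials are $w_n(x)=\sum_{k=0}^{n}\genfrac{\{}{\}}{0pt}{}{n}{k}k!\,x^k$. *)

(* Defs.v *)
From mathcomp Require Import all_boot all_order all_algebra.
Set Implicit Arguments. Unset Strict Implicit. Unset Printing Implicit Defensive.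
Import GRing.Theory Num.Theory.

Fixpoint stirling2 (n k : nat) : nat :=
  match n, k with
  | 0, 0 => 1
  | 0, _.+1 => 0
  | _.+1, 0 => 0
  | n'.+1, k'.+1 => k'.+1 * stirling2 n' k'.+1 + stirling2 n' k'
  end.

Fixpoint stirling1 (n k : nat) : nat :=
  match n, k with
  | 0, 0 => 1
  | 0, _.+1 => 0
  | _.+1, 0 => 0
  | n'.+1, k'.+1 => n' * stirling1 n' k'.+1 + stirling1 n' k'
  end.

Local Open Scope ring_scope.

Definition geom_poly (R : nzRingType) (n : nat) : {poly R} :=
  \sum_(k < n.+1) ((stirling2 n k * k`!)%:R *: 'X^k).

(* Main.v *)
Require Import Defs.
From mathcomp Require Import all_boot all_order all_algebra.
From mathcomp Require Import ring.
Import GRing.Theory Num.Theory.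


Lemma S2_gt n i : n < i -> stirling2 n i = 0.
Proof.
elim: n i => [|n IH] [|i] //= H.
by rewrite !IH ?muln0 // ltnW.
Qed.

Lemma S1_gt n i : n < i -> stirling1 n i = 0.
Proof.
elim: n i => [|n IH] [|i] //= H.
by rewrite !IH ?muln0 // ltnW.
Qed.

Definition T n k j := \sum_(m < n.+1) 'C(n, m) * stirling2 m k * stirling2 (n - m) j.

Lemma conv n k j : T n k j = 'C(j + k, k) * stirling2 n (j + k).
Proof.
elim: n k j => [|n IH] k j.
  rewrite /T big_ord1 /=.
  by case: k => [|k]; case: j => [|j]; rewrite /= ?muln0 ?mul0n ?addnS.
case: k => [|k].
  rewrite /T big_ord_recl /= big1 ?addn0 ?addn0 ?bin0 ?muln1 ?mul1n //.
  by move=> i _; rewrite /= muln0 mul0n.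
case: j => [|j].
  rewrite /T big_ord_recr /= big1 ?add0n ?subnn ?binn ?muln1 ?mul1n //.
  move=> i _; rewrite subSn; last by rewrite -ltnS.
  by rewrite /= muln0.
have Ea : \sum_(i < n.+1) 'C(n, i) * stirling2 i.+1 k.+1 * stirling2 (n - i) j.+1
   = k.+1 * T n k.+1 j.+1 + T n k j.+1.
  rewrite /T big_distrr -big_split; apply: eq_bigr => i _ /=; ring.
have Eb : \sum_(i < n.+1) 'C(n, i.+1) * stirling2 i.+1 k.+1 * stirling2 (n - i) j.+1
   = j.+1 * T n k.+1 j.+1 + T n k.+1 j.
  have -> : \sum_(i < n.+1) 'C(n, i.+1) * stirling2 i.+1 k.+1 * stirling2 (n - i) j.+1
     = \sum_(m < n.+2) 'C(n, m) * stirling2 m k.+1 * stirling2 (n.+1 - m) j.+1.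
    rewrite [RHS]big_ord_recl (_ : stirling2 0 k.+1 = 0) // muln0 mul0n add0n.
    by apply: eq_bigr => i _; rewrite lift0.
  rewrite big_ord_recr /= bin_small // mul0n addn0.
  rewrite /T big_distrr -big_split; apply: eq_bigr => i _ /=.
  rewrite subSn; last by rewrite -ltnS.
  rewrite /=; ring.
rewrite /T big_ord_recl /= muln0 mul0n add0n.
under eq_bigr => i _ do rewrite subSS binS mulnDl mulnDl.
rewrite big_split /= Ea Eb !IH.
rewrite !addnS !addSn /= binS.
ring.
Qed.
Local Open Scope ring_scope.

Definition Hp (R : nzRingType) k n : {poly R} :=
  \poly_(i < n.+1) ('C(i + k, k) * stirling2 n i * i`!)%:R.

Lemma coefH (R : nzRingType) k n i :
  (Hp R k n)`_i = ('C(i + k, k) * stirling2 n i * i`!)%:R.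
Proof.
rewrite coef_poly; case: ltnP => // H.
by rewrite S2_gt // muln0 mul0n.
Qed.

Lemma coefW (R : nzRingType) n i :
  (geom_poly R n)`_i = (stirling2 n i * i`!)%:R.
Proof.
have -> : geom_poly R n = \poly_(i < n.+1) (stirling2 n i * i`!)%:R.
  by rewrite poly_def.
rewrite coef_poly; case: ltnP => // H.
by rewrite S2_gt // mul0n.
Qed.

Lemma W_H0 (R : nzRingType) n : geom_poly R n = Hp R 0 n.
Proof. by apply/polyP => i; rewrite coefW coefH addn0 bin0 mul1n. Qed.

Lemma Hrec (R : comNzRingType) k n :
  Hp R k n.+1 + k.+1%:R *: Hp R k n = k.+1%:R *: ((1 + 'X) * Hp R k.+1 n).
Proof.
apply/polyP => i; rewrite coefD !coefZ mulrDl mul1r coefD coefXM !coefH.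
case: i => [|i].
  rewrite /= addr0 -!natrM -natrD; congr (_%:R).
  rewrite !add0n !binn /=; ring.
rewrite [stirling2 n.+1 i.+1]/= [i.+1.-1]/= factS.
rewrite -!natrM -!natrD -natrM; congr (_%:R).
have I1 : ((i.+1 + k).+1 * 'C(i.+1 + k, k) = k.+1 * 'C(i.+1 + k.+1, k.+1))%N.
  by rewrite addnS -mul_bin_diag.
have I2 : (i.+1 * 'C(i.+1 + k, k) = k.+1 * 'C(i + k.+1, k.+1))%N.
  by rewrite mul_bin_left addnS -addSn addnK.
rewrite [RHS]mulnDr !mulnA -I1 -I2.
ring.
Qed.

Definition G (R : nzRingType) k n : {poly R} :=
  \sum_(j < k.+1) (stirling1 k.+1 j.+1)%:R *: geom_poly R (n + j).

Lemma S1S k j : stirling1 k.+1 j.+1 = (k * stirling1 k j.+1 + stirling1 k j)%N.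
Proof. by []. Qed.

Lemma GA (R : comNzRingType) k n :
  G R k n = k`!%:R *: ((1 + 'X)^+k * Hp R k n).
Proof.
elim: k n => [|k IH] n.
  rewrite /G big_ord1 addn0 (_ : stirling1 1 (@nat_of_ord 1 ord0).+1 = 1%N) //.
  by rewrite scale1r expr0 mul1r fact0 scale1r W_H0.
have E1 : G R k.+1 n = k.+1%:R *: G R k n + G R k n.+1.
  rewrite /G.
  under eq_bigr => j _ do rewrite S1S natrD scalerDl natrM -scalerA.
  rewrite big_split scaler_sumr; congr (_ + _).
    rewrite big_ord_recr [X in _ + X = _](_ : _ = 0) ?addr0 //.
    by rewrite S1_gt // scale0r scaler0.
  rewrite big_ord_recl [X in X + _ = _](_ : _ = 0) ?add0r; last by rewrite /= scale0r.
  apply: eq_bigr => j _.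
  by rewrite lift0 addnS addSn.
have HR := Hrec R k n.
rewrite E1 !IH factS.
have -> : Hp R k n.+1 = k.+1%:R *: ((1 + 'X) * Hp R k.+1 n) - k.+1%:R *: Hp R k n.
  by rewrite -HR addrK.
rewrite !scaler_nat.
rewrite exprS.
ring.
Qed.

Lemma B (R : nzRingType) n k :
  (geom_poly R n)^`(k) =
  (k`! * k`!)%:R *: \sum_(m < n.+1) ('C(n, m) * stirling2 m k)%:R *: Hp R k (n - m).
Proof.
apply/polyP => i; rewrite coef_derivn coefW coefZ coef_sum.
under eq_bigr => m _ do rewrite coefZ coefH -natrM.
rewrite -natr_sum -natrM -mulrnA; congr (_%:R).
have -> : (\sum_(m < n.+1) 'C(n, m) * stirling2 m k * ('C(i + k, k) * stirling2 (n - m) i * i`!)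
   = T n k i * ('C(i + k, k) * i`!))%N.
  rewrite /T big_distrl; apply: eq_bigr => m _ /=; ring.
rewrite conv (addnC k i) -bin_ffact -(bin_fact (leq_addl i k)) addnK.
ring.
Qed.

Lemma sum_from (R : nmodType) k N (F : nat -> R) :
  (forall m, (m < k)%N -> F m = 0) ->
  \sum_(k <= m < N) F m = \sum_(m < N) F m.
Proof.
move=> F0; elim: N => [|N IH]; first by rewrite big_geq // big_ord0.
case: (leqP k N) => kN.
  by rewrite big_nat_recr //= big_ord_recr /= IH.
rewrite big_geq // big1 // => m _; apply: F0.
exact: leq_trans (ltn_ord m) kN.
Qed.

Theorem mainTheorem2 (R : numFieldType) (n k : nat) (x : R) :
  x != -1 ->
  ((geom_poly R n)^`(k)).[x] =
    (k`!)%:R / (1 + x) ^+ k *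
    \sum_(k <= m < n.+1) \sum_(j < k.+1)
       ('C(n, m) * stirling2 m k * stirling1 k.+1 j.+1)%:R
         * (geom_poly R (n - m + j)).[x].
Proof.
move=> hx.
have hx1 : (1 + x) ^+ k != 0.
  by rewrite expf_neq0 // addrC addr_eq0.
rewrite sum_from; last first.
  by move=> m mk; apply: big1 => j _; rewrite S2_gt // muln0 mul0n mul0r.
have E : forall m : nat, \sum_(j < k.+1)
       ('C(n, m) * stirling2 m k * stirling1 k.+1 j.+1)%:R
         * (geom_poly R (n - m + j)).[x]
   = ('C(n, m) * stirling2 m k)%:R * (k`!%:R * ((1 + x) ^+ k * (Hp R k (n - m)).[x])).
  move=> m.
  have GAx := congr1 (fun p => p.[x]) (GA R k (n - m)).
  rewrite /= hornerZ hornerM horner_exp hornerD hornerC hornerX in GAx.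
  rewrite -GAx /G horner_sum big_distrr; apply: eq_bigr => j _.
  by rewrite hornerZ natrM -mulrA.
under eq_bigr => m _ do rewrite E.
have Bx := congr1 (fun p => p.[x]) (B R n k).
rewrite /= hornerZ horner_sum in Bx.
rewrite Bx.
have -> : \sum_(m < n.+1) ('C(n, m) * stirling2 m k)%:R * (k`!%:R * ((1 + x) ^+ k * (Hp R k (n - m)).[x]))
  = (1 + x) ^+ k * k`!%:R * \sum_(m < n.+1) (('C(n, m) * stirling2 m k)%:R *: Hp R k (n - m)).[x].
  rewrite mulr_sumr; apply: eq_bigr => m _; rewrite hornerZ; ring.
rewrite natrM.
by field.
Qed.
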